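(* For any positive integers $k$ and $q$ with $q\ge2$, no two distinct points of $D_{q,k}$ are scalar multiples of each other.
   Context: For positive integers $q,k$ with $k\ge2$, let $X_{q,k}=\prod_{j=1}^{k-1}(q^{k+j}+q^{k-j}+1)$ and let $D_{q,k}\subseteq\mathbb{Z}^2$ consist of the points $\frac{X_{q,k}}{q^{k+j}+q^{k-j}+1}\left(q^{k+j}-q^{k-j},\,-q^j-2q^k\right)$ for $j=1,\ldots,k-1$. *)

(* Defs.v *)
From mathcomp Require Import all_boot all_order all_algebra.
Set Implicit Arguments. Unset Strict Implicit. Unset Printing Implicit Defensive.
Import Order.TTheory GRing.Theory Num.Theory.
Local Open Scope ring_scope.

Definition denD (q k j : nat) : int :=
  (q ^ (k + j))%N%:Z + (q ^ (k - j))%N%:Z + 1.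

Definition Xqk (q k : nat) : int := \prod_(1 <= j < k) denD q k j.

(* the j-th point of D_{q,k}:
   X/(q^(k+j)+q^(k-j)+1) * (q^(k+j) - q^(k-j), -q^j - 2 q^k) ;
   the division is exact integer division *)
Definition ptD (q k j : nat) : int * int :=
  let c := (Xqk q k %/ denD q k j)%Z in
  (c * ((q ^ (k + j))%N%:Z - (q ^ (k - j))%N%:Z),
   c * (- (q ^ j)%N%:Z - 2 * (q ^ k)%N%:Z)).

Definition inD (q k : nat) (p : int * int) : Prop :=
  exists j : nat, (1 <= j < k)%N /\ p = ptD q k j.

Definition scalar_multiple (u v : int * int) : Prop :=
  exists c : rat, (u.1%:~R : rat) = c * v.1%:~R /\ (u.2%:~R : rat) = c * v.2%:~R.

(* Main.v *)
Require Import Defs.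
From mathcomp Require Import all_boot all_order all_algebra.
From mathcomp Require Import ring zify.
Import Order.TTheory GRing.Theory Num.Theory.
Local Open Scope ring_scope.

Lemma key (a b m m' Q : int) : 0 < a -> a < b -> 0 < Q -> m*a = Q -> m'*b = Q ->
  (Q*a - m)*(b+2*Q) = (Q*b - m')*(a+2*Q) -> False.
Proof.
move=> ha hab hQ h1 h2 E.
have H : Q*((b-a)*(2*Q*a*b+a+b+2*Q)) =
  a*b*((Q*b - m')*(a+2*Q) - (Q*a - m)*(b+2*Q)) - a*(a+2*Q)*(Q - m'*b) + b*(b+2*Q)*(Q - m*a).
  by ring.
rewrite E subrr h1 h2 subrr !mulr0 in H. rewrite subr0 addr0 in H.
have : 0 < Q*((b-a)*(2*Q*a*b+a+b+2*Q)).
  apply: mulr_gt0 => //; apply: mulr_gt0; first by rewrite subr_gt0.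
  have hb : 0 < b by apply: lt_trans hab.
  by rewrite !addr_gt0 // ?mulr_gt0.
by rewrite H ltxx.
Qed.

Lemma flip (A B C D W : int) : A*(-C - 2*W) = (-D - 2*W)*B ->
  A*(C+2*W) - B*(D+2*W) = 0.
Proof.
move=> E; have -> : A*(C+2*W) - B*(D+2*W) = -(A*(-C - 2*W) - (-D - 2*W)*B) by ring.
by rewrite E subrr oppr0.
Qed.

Lemma noeq (q k j j' : nat) : (2 <= q)%N -> (j < j')%N -> (j' < k)%N ->
  ((q ^ (k + j))%N%:Z - (q ^ (k - j))%N%:Z) * (- (q ^ j')%N%:Z - 2 * (q ^ k)%N%:Z) =
  (- (q ^ j)%N%:Z - 2 * (q ^ k)%N%:Z) * ((q ^ (k + j'))%N%:Z - (q ^ (k - j'))%N%:Z) -> False.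
Proof.
move=> hq hjj hj'k E.
have hjk : (j <= k)%N by lia.
have hj'k' : (j' <= k)%N by lia.
have eQ1 : (q ^ (k - j) * q ^ j)%N = (q ^ k)%N by rewrite -expnD subnK.
have eQ2 : (q ^ (k - j') * q ^ j')%N = (q ^ k)%N by rewrite -expnD subnK.
rewrite !expnD !PoszM in E.
apply: (@key (q ^ j)%N%:Z (q ^ j')%N%:Z (q ^ (k - j))%N%:Z (q ^ (k - j'))%N%:Z (q ^ k)%N%:Z).
- by rewrite ltz_nat expn_gt0; lia.
- by rewrite ltz_nat ltn_exp2l.
- by rewrite ltz_nat expn_gt0; lia.
- by rewrite -PoszM eQ1.
- by rewrite -PoszM eQ2.
- apply/eqP; rewrite -subr_eq0; apply/eqP.
  exact: flip E.
Qed.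

Lemma denD_gt0 q k j : 0 < denD q k j.
Proof. by rewrite /denD ltr_wpDl // addr_ge0. Qed.

Lemma cpos (q k j : nat) : (1 <= j < k)%N -> (0 < Xqk q k %/ denD q k j)%Z.
Proof.
case/andP=> h1 h2.
rewrite /Xqk (@big_cat_nat _ _ _ j 1 k _ _ h1 (ltnW h2)) /= [\prod_(j <= i < k) _]big_ltn //.
set A := \prod_(1 <= i < j) _. set B := \prod_(j.+1 <= i < k) _.
have -> : A * (denD q k j * B) = (A * B) * denD q k j by ring.
rewrite mulzK; last by rewrite gt_eqF // denD_gt0.
by apply: mulr_gt0; apply: prodr_gt0 => i _; apply: denD_gt0.
Qed.

Theorem lemma5 (k q : nat) (hk : (0 < k)%N) (hq : (2 <= q)%N)
  (u v : int * int) :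
  inD q k u -> inD q k v -> u <> v -> ~ scalar_multiple u v.
Proof.
move=> [j [hj ->]] [j' [hj' ->]] neq [c [e1 e2]].
have cross : (ptD q k j).1 * (ptD q k j').2 = (ptD q k j).2 * (ptD q k j').1.
  move: e1 e2; case: (ptD q k j) => x1 x2; case: (ptD q k j') => y1 y2 /= e1 e2.
  by apply/eqP; rewrite -(eqr_int rat) !intrM e1 e2; apply/eqP; ring.
move: cross; rewrite /ptD /=.
set cj := (Xqk q k %/ denD q k j)%Z. set cj' := (Xqk q k %/ denD q k j')%Z.
have hc : cj * cj' != 0 by rewrite mulf_neq0 // gt_eqF // cpos.
move=> cross.
have E : ((q ^ (k + j))%N%:Z - (q ^ (k - j))%N%:Z) * (- (q ^ j')%N%:Z - 2 * (q ^ k)%N%:Z) =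
  (- (q ^ j)%N%:Z - 2 * (q ^ k)%N%:Z) * ((q ^ (k + j'))%N%:Z - (q ^ (k - j'))%N%:Z).
  apply: (mulfI hc).
  by rewrite mulrACA [RHS]mulrACA.
case/andP: hj => hj1 hj2; case/andP: hj' => hj1' hj2'.
case: (ltngtP j j') => h.
- exact: (@noeq q k j j' hq h hj2' E).
- apply: (@noeq q k j' j hq h hj2); by rewrite [LHS]mulrC [RHS]mulrC E.
- by apply: neq; rewrite h.
Qed.
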